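(* Let $\Sigma$ be a finite connected multigraph (loops allowed) and $\varphi\colon V(\Sigma)\to\mathbb{R}$. Then \[\max_v\varphi(v)-\min_v\varphi(v)\le M(\Delta(\varphi))\cdot\operatorname{diam}(\Sigma).\]
   Context: For $\varphi\colon V(\Sigma)\to\mathbb{R}$, the Laplacian is the divisor (real-valued function on vertices) $\Delta(\varphi)(v)=\sum_{e=vw}(\varphi(v)-\varphi(w))$, the sum over edges $e$ incident to $v$ with other endpoint $w$ (loops contribute $0$). For $f\colon V(\Sigma)\to\mathbb{R}$, $M(f)=\max_{S\subseteq V(\Sigma)}\left|\sum_{v\in S}f(v)\right|$. $\operatorname{diam}(\Sigma)$ is the maximum over pairs of vertices of the number of edges in a shortest path joining them. *)

(* Defs.v *)
From HB Require Import structures.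
From mathcomp Require Import all_boot all_order all_algebra.
Set Implicit Arguments. Unset Strict Implicit. Unset Printing Implicit Defensive.
Import Order.TTheory GRing.Theory Num.Theory.

(* A finite multigraph (loops and parallel edges allowed) is given by a
   finite vertex type V, a finite edge type E and the two endpoints
   src e, tgt e of each edge e (orientation is irrelevant below). *)

Section Multigraph.
Variables (V E : finType) (src tgt : E -> V).

Definition adj : rel V :=
  fun u w => [exists e : E, ((src e == u) && (tgt e == w))
                          || ((src e == w) && (tgt e == u))].

Definition connected_mg : Prop := forall u w : V, connect adj u w.

Definition walk_of_len (u w : V) (n : nat) : bool :=
  [exists t : n.-tuple V, path adj u t && (last u t == w)].

(* graph distance: least number of edges of a walk (equivalently of a
   path) from u to w; in a connected graph a shortest path has fewer
   than #|V| edges, so searching n in [0, #|V|) suffices. *)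
Definition gdist (u w : V) : nat :=
  find (walk_of_len u w) (iota 0 #|V|).

Definition diam : nat := \max_(u : V) \max_(w : V) gdist u w.

Local Open Scope ring_scope.
Variable R : realFieldType.

(* Laplacian: Delta(phi)(v) = sum over edges e incident to v, with other
   endpoint w, of (phi v - phi w); loops contribute 0. *)
Definition laplacian (phi : V -> R) (v : V) : R :=
  \sum_(e : E | src e == v) (phi v - phi (tgt e))
  + \sum_(e : E | (tgt e == v) && (src e != v)) (phi v - phi (src e)).

Definition Mnorm (f : V -> R) : R :=
  \big[Num.max/0]_(S : {set V}) `|\sum_(v in S) f v|.

End Multigraph.

(* Main.v *)
Require Import Defs.
From HB Require Import structures.
From mathcomp Require Import all_boot all_order all_algebra.
Import Order.TTheory GRing.Theory Num.Theory.
Local Open Scope ring_scope.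

Section Aux.
Variable R : realFieldType.
Variables (V E : finType) (src tgt : E -> V).

Lemma sum_pick (S : {set V}) (a : V) (c : R) :
  \sum_(v | (v \in S) && (a == v)) c = if a \in S then c else 0.
Proof.
rewrite big_mkcond (bigD1 a) //= big1 ?addr0; last first.
  by move=> v /negPf hv; rewrite eq_sym hv andbF.
by rewrite eqxx andbT.
Qed.

Lemma sum_lap (phi : V -> R) (S : {set V}) :
  \sum_(v in S) laplacian src tgt phi v =
  \sum_e ((if src e \in S then phi (src e) - phi (tgt e) else 0)
        + (if (tgt e \in S) && (src e != tgt e) then phi (tgt e) - phi (src e) else 0)).
Proof.
rewrite /laplacian big_split /= [RHS]big_split /=; congr (_ + _).
  rewrite (eq_bigr (fun v => \sum_(e | src e == v) (phi (src e) - phi (tgt e)))); last first.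
    by move=> v _; apply: eq_bigr => e /eqP ->.
  rewrite (exchange_big_dep xpredT) //=; apply: eq_bigr => e _.
  rewrite (eq_bigl (fun v => (v \in S) && (src e == v))); last by move=> v; rewrite eq_sym.
  by rewrite sum_pick.
rewrite (eq_bigr (fun v => \sum_(e | (tgt e == v) && (src e != tgt e)) (phi (tgt e) - phi (src e)))); last first.
  move=> v _; rewrite (eq_bigl (fun e => (tgt e == v) && (src e != tgt e))).
    by apply: eq_bigr => e /andP[/eqP -> _].
  by move=> e; case: eqP => // ->.
rewrite (exchange_big_dep xpredT) //=; apply: eq_bigr => e _.
case: (src e != tgt e); last first.
  by rewrite andbF big_mkcond big1 // => v _; rewrite !andbF.
rewrite andbT (eq_bigl (fun v => (v \in S) && (tgt e == v))); last first.
  by move=> v; rewrite andbT.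
by rewrite sum_pick.
Qed.

Lemma bigmax_ge_seq (T : eqType) (g : T -> R) (r : seq T) x :
  x \in r -> g x <= \big[Num.max/0]_(i <- r) g i.
Proof.
elim: r => // y r IH; rewrite inE big_cons => /orP[/eqP->|/IH H].
  by rewrite le_max lexx.
by rewrite le_max H orbT.
Qed.

Lemma bigmax_ge0_seq (T : eqType) (g : T -> R) (r : seq T) :
  0 <= \big[Num.max/0]_(i <- r) g i.
Proof.
elim: r => [|y r IH]; first by rewrite big_nil.
by rewrite big_cons le_max IH orbT.
Qed.

Lemma Mnorm_ge (f : V -> R) (S : {set V}) : `|\sum_(v in S) f v| <= Mnorm f.
Proof.
rewrite /Mnorm; move: (mem_index_enum S); elim: (index_enum _) => // y r IH.
rewrite inE big_cons => /orP[/eqP->|/IH H].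
  by rewrite le_max lexx.
by rewrite le_max H orbT.
Qed.

Lemma Mnorm_ge0 (f : V -> R) : 0 <= Mnorm f.
Proof.
rewrite /Mnorm; elim: (index_enum _) => [|y r IH]; first by rewrite big_nil.
by rewrite big_cons le_max IH orbT.
Qed.

Lemma edge_bound (phi : V -> R) a b :
  adj src tgt a b -> phi a - phi b <= Mnorm (laplacian src tgt phi).
Proof.
move=> /existsP[e0 He0].
have [hab|hab] := leP (phi a) (phi b).
  by apply: le_trans (Mnorm_ge0 _); rewrite subr_le0.
set S := [set v | phi a <= phi v].
apply: le_trans (Mnorm_ge _ S); apply: le_trans (ler_norm _).
rewrite sum_lap.
pose F := fun e => (if src e \in S then phi (src e) - phi (tgt e) else 0)
        + (if (tgt e \in S) && (src e != tgt e) then phi (tgt e) - phi (src e) else 0).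
rewrite -/(\sum_e F e).
have F0 : forall e, 0 <= F e.
  move=> e; rewrite /F !inE.
  case: (lerP (phi a) (phi (src e))) => hs; case: (lerP (phi a) (phi (tgt e))) => ht /=.
  - case: eqP => [->|_] /=; first by rewrite subrr !addr0.
    by rewrite addrC subrKA subrr.
  - by rewrite addr0 subr_ge0 ltW // (lt_le_trans ht hs).
  - have -> : src e != tgt e.
      by apply/eqP => E1; move: hs; rewrite E1 => /(le_lt_trans ht); rewrite ltxx.
    by rewrite add0r subr_ge0 ltW // (lt_le_trans hs ht).
  - by rewrite addr0.
rewrite (bigD1 e0) //=; apply: (le_trans (_ : _ <= F e0)); last first.
  by rewrite lerDl sumr_ge0.
rewrite /F !inE.
case/orP: He0 => /andP[/eqP Hs /eqP Ht]; rewrite Hs Ht lexx /=.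
  by rewrite (leNgt (phi a) (phi b)) hab /= addr0 lexx.
rewrite (leNgt (phi a) (phi b)) hab /= add0r.
have -> : b != a by apply/eqP => E1; move: hab; rewrite E1 ltxx.
by rewrite lexx.
Qed.

Lemma walk_bound (phi : V -> R) x (t : seq V) :
  path (adj src tgt) x t ->
  phi x - phi (last x t) <= Mnorm (laplacian src tgt phi) * (size t)%:R.
Proof.
elim: t x => [|y t IH] x /=; first by rewrite subrr mulr0.
move=> /andP[hxy hp].
rewrite -(subrKA (phi y)) -addn1 natrD mulrDr mulr1 addrC.
by apply: lerD; [apply: IH | apply: edge_bound].
Qed.

End Aux.

Theorem mainTheorem7 (R : realFieldType) (V E : finType) (src tgt : E -> V)
  (phi : V -> R) :
  connected_mg src tgt ->
  forall u w : V,
    phi u - phi w <= Mnorm (laplacian src tgt phi) * (diam src tgt)%:R.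
Proof.
move=> conn u w.
have hwalk : has (walk_of_len src tgt u w) (iota 0 #|V|).
  move/connectP: (conn u w) => [p hp ->].
  case: (shortenP hp) => p' hp' huniq _.
  apply/hasP; exists (size p').
    rewrite mem_iota add0n /=; move/card_uniqP: huniq => /= <-.
    exact: max_card.
  by apply/existsP; exists (in_tuple p'); rewrite hp' eqxx.
have := nth_find 0%N hwalk; rewrite nth_iota; last first.
  by move: hwalk; rewrite has_find size_iota.
rewrite ?add0n -/(gdist src tgt u w) => /existsP[t /andP[ht /eqP hl]].
rewrite -hl; apply: le_trans (@walk_bound _ _ _ _ _ phi _ _ ht) _.
rewrite size_tuple; apply: ler_wpM2l; first exact: Mnorm_ge0.
rewrite ler_nat.
rewrite /diam.
have H1 := @leq_bigmax V (fun w => gdist src tgt u w) w.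
have H2 := @leq_bigmax V (fun u => \max_(w : V) gdist src tgt u w) u.
exact: leq_trans H1 H2.
Qed.
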